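(* Let $G$ be a tournament with matching ordering $v_1,\ldots,v_n$, and let $X=\{1,\ldots,n\}$. Suppose $\sigma\in S_n$ is such that $v_{\sigma(1)},\ldots,v_{\sigma(n)}$ is also a matching ordering of $G$. Then: (a) if $\sigma=\sigma_X$, then $G$ is either transitive or isomorphic to $P_n$, and the ordering $v_1,\ldots,v_n$ is $\pi_2 G$; (b) if $\sigma=\sigma_X^{-1}$, then $G$ is either transitive or isomorphic to $P_n$, and the ordering $v_1,\ldots,v_n$ is $\pi_1 G$; (c) if $n=4$ and $\sigma=\tau_X$, then $G$ is isomorphic to $P_4$, and the ordering $v_1,\ldots,v_4$ is either $\pi_2 G$ or $\pi_2\pi_1 G$.
   Context: A tournament is a finite, non-null, loopless directed graph in which for any two distinct vertices $u,v$ there is exactly one edge with both ends in $\{u,v\}$; write $u\to v$ for the edge from $u$ to $v$. Given an ordering $v_1,\dots,v_n$ of the vertices, a backedge is an edge $v_j\to v_i$ with $j>i$; the ordering is a matching ordering if every vertex is the head or tail of at most one backedge. A tournament is transitive if it has an ordering $u_1,\dots,u_n$ with $u_i\to u_j$ for all $i<j$ (its standard ordering). $P_n$ is the tournament on $u_1,\dots,u_n$ with $u_i\to u_j$ if $j-i\ge2$ and $u_{i+1}\to u_i$ for $1\le i\le n-1$; for $n\ne3$ this defining ordering is unique. For $X=\{b,\dots,a\}$: if $|X|$ is odd, $\sigma_X=(b\ b{+}2\ \cdots\ a{-}2\ a\ a{-}1\ a{-}3\ \cdots\ b{+}1)$; if $|X|$ is even, $\sigma_X=(b\ b{+}2\ \cdots\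 a{-}1\ a\ a{-}2\ \cdots\ b{+}1)$ (identity if $|X|=1$, the transposition $(b\ a)$ if $|X|=2$); if $|X|=4$, $\tau_X=(b\ b{+}2)(b{+}1\ b{+}3)$. For a tournament $G$ on $n$ vertices that is transitive or isomorphic to $P_n$, let $u_1,\dots,u_n$ be its standard ordering (if transitive) or its defining $P_n$ ordering (for $P_3$: some defining ordering); then $\pi_1G$ is the ordering obtained from $u_1,\dots,u_n$ by swapping $u_{2j-1}$ and $u_{2j}$ for every $j$ with $2j\le n$, i.e. $u_2,u_1,u_4,u_3,\dots$; $\pi_2G$ is obtained by swapping $u_{2j}$ and $u_{2j+1}$ for every $j\ge1$ with $2j+1\le n$, i.e. $u_1,u_3,u_2,u_5,u_4,\dots$; and for $G\cong P_4$, $\pi_2\pi_1G$ is the ordering $u_2,u_4,u_1,u_3$. If $n=2$, any ordering counts as $\pi_1G$ and $\pi_2G$. *)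

(* Defs.v *)
From mathcomp Require Import all_boot all_fingroup.
Set Implicit Arguments. Unset Strict Implicit. Unset Printing Implicit Defensive.

(* A tournament on the finite vertex type V: adj x y means the edge x -> y. *)
Definition tournament (V : finType) (adj : rel V) : Prop :=
  0 < #|V| /\
  (forall x, ~~ adj x x) /\
  (forall x y, x != y -> adj x y (+) adj y x).

(* An ordering v_1,...,v_n of the vertices is an injection 'I_n -> V
   (together with #|V| = n it is a bijection); position i : 'I_n is the
   paper's index i+1. *)
Definition is_ordering (V : finType) (n : nat) (o : 'I_n -> V) : Prop :=
  #|V| = n /\ injective o.

Definition backedge (V : finType) (adj : rel V) (n : nat) (o : 'I_n -> V)
  (i j : 'I_n) : bool := (i < j) && adj (o j) (o i).

Definition matching_ordering (V : finType) (adj : rel V) (n : nat)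
  (o : 'I_n -> V) : Prop :=
  is_ordering o /\
  forall k : 'I_n,
    #|[set l : 'I_n | backedge adj o k l || backedge adj o l k]| <= 1.

Definition transitive_ordering (V : finType) (adj : rel V) (n : nat)
  (o : 'I_n -> V) : Prop :=
  is_ordering o /\ forall i j : 'I_n, i < j -> adj (o i) (o j).

Definition Pn_ordering (V : finType) (adj : rel V) (n : nat)
  (o : 'I_n -> V) : Prop :=
  is_ordering o /\
  (forall i j : 'I_n, i.+2 <= j -> adj (o i) (o j)) /\
  (forall i j : 'I_n, j = i.+1 :> nat -> adj (o j) (o i)).

(* Permutations on {1,...,n} (1-based, as in the paper), as functions on nat. *)
(* The cyclic permutation (s_0 s_1 ... s_{m-1}) in cycle notation. *)
Definition cycle_fun (s : seq nat) (x : nat) : nat :=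
  if x \in s then nth x (rot 1 s) (index x s) else x.

(* sigma_X for X = {1,...,n}: the cycle (1 3 5 ... [odds up] ... [evens down] ... 4 2) *)
Definition sigmaX_seq (n : nat) : seq nat :=
  [seq k <- iota 1 n | odd k] ++ rev [seq k <- iota 1 n | ~~ odd k].
Definition sigmaX (n : nat) (k : nat) : nat := cycle_fun (sigmaX_seq n) k.

Definition tauX (k : nat) : nat :=
  match k with 1 => 3 | 2 => 4 | 3 => 1 | 4 => 2 | _ => k end.

(* pi_1 / pi_2: the k-th entry (1-based) of pi_1 G (resp. pi_2 G) is
   u_(pi1_idx n k) (resp. u_(pi2_idx n k)), u the standard/defining ordering. *)
Definition pi1_idx (n k : nat) : nat :=
  if odd k then (if k.+1 <= n then k.+1 else k) else k.-1.
Definition pi2_idx (n k : nat) : nat :=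
  if odd k then (if 3 <= k then k.-1 else k) else (if k.+1 <= n then k.+1 else k).
Definition pi21_idx (k : nat) : nat :=
  match k with 1 => 2 | 2 => 4 | 3 => 1 | 4 => 3 | _ => k end.

Definition reindexed (V : finType) (n : nat) (v u : 'I_n -> V)
  (idx : nat -> nat) : Prop :=
  forall i j : 'I_n, j.+1 = idx i.+1 -> v i = u j.

(* Main.v *)
Require Import Defs.
From mathcomp Require Import all_boot all_fingroup.
From mathcomp Require Import zify.
Set Warnings "-notation-overridden".

Definition sw (p : bool) (n k : nat) : nat :=
  if (odd k == p) && (k.+1 < n) then k.+1
  else if (odd k != p) && (0 < k) then k.-1 else k.
Ltac swt := rewrite /sw; repeat (case: ifP); lia.
Lemma sw_lt p n k : k < n -> sw p n k < n.
Proof. case: p; swt. Qed.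
Lemma swK p n k : k < n -> sw p n (sw p n k) = k.
Proof. case: p; swt. Qed.
Lemma sw_far p n a b : a.+2 <= b -> b < n -> sw p n a < sw p n b.
Proof. case: p; swt. Qed.
Lemma sw_cons p n k : k.+1 < n -> (sw p n k < sw p n k.+1) = (odd k != p).
Proof. case: p; swt. Qed.
Lemma sw_cons' p n k : k.+1 < n -> (sw p n k.+1 < sw p n k) = (odd k == p).
Proof. case: p; swt. Qed.

Lemma cycle_fun_nth (s : seq nat) i : uniq s -> i < size s ->
  cycle_fun s (nth 0 s i) = nth 0 s (if i.+1 < size s then i.+1 else 0).
Proof.
move=> Us Hi; rewrite /cycle_fun mem_nth // index_uniq //.
rewrite (set_nth_default 0); last by rewrite size_rot.
case: s Us Hi => // x s' _ /= Hi.
rewrite rot1_cons nth_rcons ltnS; case: ltnP => H //=.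
have -> : i = size s' by lia.
by rewrite eqxx.
Qed.
Lemma odds_eq n : [seq k <- iota 1 n | odd k] = mkseq (fun i => i.*2.+1) (uphalf n).
Proof.
elim: n => // n IH.
rewrite -[n.+1]addn1 iotaD filter_cat IH /= add1n.
case: ifP => Ho.
  have -> : uphalf (n + 1) = (uphalf n).+1 by lia.
  rewrite mkseqS cats1; congr rcons; lia.
have -> : uphalf (n + 1) = (uphalf n) by lia.
by rewrite cats0.
Qed.
Lemma evens_eq n : [seq k <- iota 1 n | ~~ odd k] = mkseq (fun i => i.*2.+2) (n./2).
Proof.
elim: n => // n IH.
rewrite -[n.+1]addn1 iotaD filter_cat IH /= add1n.
case: ifP => Ho.
  have -> : (n + 1)./2 = (n./2).+1 by lia.
  rewrite mkseqS cats1; congr rcons; lia.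
have -> : (n + 1)./2 = n./2 by lia.
by rewrite cats0.
Qed.
Lemma sX_size n : size (sigmaX_seq n) = n.
Proof. rewrite /sigmaX_seq odds_eq evens_eq size_cat size_rev !size_mkseq; lia. Qed.
Lemma sX_uniq n : uniq (sigmaX_seq n).
Proof.
rewrite /sigmaX_seq cat_uniq rev_uniq !filter_uniq ?iota_uniq //=.
rewrite andbT; apply/hasPn => x; rewrite mem_rev !mem_filter /= => /andP[Ho _]; by rewrite (negbTE Ho).
Qed.
Lemma sX_nth n i : i < n -> nth 0 (sigmaX_seq n) i =
   if i < uphalf n then i.*2.+1 else (n - i).*2.
Proof.
move=> Hi; rewrite /sigmaX_seq odds_eq evens_eq nth_cat size_mkseq.
case: ifP => H; first by rewrite nth_mkseq.
rewrite nth_rev size_mkseq; last by lia.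
rewrite nth_mkseq; lia.
Qed.
Lemma SX n k : k < n -> sigmaX n k.+1 = (sw true n (sw false n k)).+1.
Proof.
move=> Hk.
pose i := if odd k then n - (k.+1)./2 else k./2.
have Hi : i < n by rewrite /i; case: ifP; lia.
have Hn : nth 0 (sigmaX_seq n) i = k.+1.
  rewrite sX_nth // /i; case Ho: (odd k); case: ifP; lia.
rewrite /sigmaX -Hn cycle_fun_nth ?sX_uniq ?sX_size //.
case: ifP => Hi1; rewrite sX_nth; try lia; rewrite /i /sw in Hi1 *; 
 case Ho: (odd k) in Hi1 *; repeat case: ifP; lia.
Qed.

Section Core.
Variables (V : finType) (adj : rel V) (n : nat) (U : nat -> V) (p : bool).
Hypothesis Utour : forall a b, a < n -> b < n -> a != b -> adj (U a) (U b) (+) adj (U b) (U a).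
Definition bk (al : nat -> nat) a b :=
  (al a < al b) && adj (U b) (U a) || (al b < al a) && adj (U a) (U b).
Hypothesis M1 : forall a b c, a < n -> b < n -> c < n ->
  bk (sw p n) a b -> bk (sw p n) a c -> b = c.
Hypothesis M2 : forall a b c, a < n -> b < n -> c < n ->
  bk (sw (~~ p) n) a b -> bk (sw (~~ p) n) a c -> b = c.

Lemma tour_neg a b : a < n -> b < n -> a != b -> adj (U b) (U a) = ~~ adj (U a) (U b).
Proof. move=> Ha Hb Hab; move: (Utour a b Ha Hb Hab); by case: (adj _ _); case: (adj _ _). Qed.

Lemma bkC al a b : bk al a b = bk al b a.
Proof. by rewrite /bk orbC. Qed.

Lemma bk_cons q k : k.+1 < n -> bk (sw q n) k k.+1 = (adj (U k) (U k.+1) == (odd k == q)).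
Proof.
move=> Hk; rewrite /bk sw_cons // sw_cons' // tour_neg //; try lia.
all: by case: (odd k == q); case: (adj _ _).
Qed.

Lemma far_fwd a b : a.+2 <= b -> b < n -> adj (U a) (U b).
Proof.
move=> Hab Hb; apply/negP => Hn.
have Ha : a < n by lia.
have Ha1 : a.+1 < n by lia.
have Hba : adj (U b) (U a) by rewrite tour_neg ?(negbTE Hn) //; lia.
have B1 : bk (sw p n) a b by rewrite /bk sw_far // Hba.
have B2 : bk (sw (~~p) n) a b by rewrite /bk sw_far // Hba.
have [E1|E1] : bk (sw p n) a a.+1 \/ bk (sw (~~p) n) a a.+1.
  by rewrite !bk_cons //; case: (adj _ _); case: (odd a); case: p; auto.
  move: (M1 a b a.+1 Ha Hb Ha1 B1 E1); lia.
move: (M2 a b a.+1 Ha Hb Ha1 B2 E1); lia.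
Qed.

Lemma cons_eq k : k.+2 < n -> adj (U k) (U k.+1) = adj (U k.+1) (U k.+2).
Proof.
move=> Hk; have Hk1 : k.+1 < n by lia.
have Hk0 : k < n by lia.
case E: (adj (U k) (U k.+1)); case E': (adj (U k.+1) (U k.+2)) => //; exfalso.
all: have [[B1 B2]|[B1 B2]] : (bk (sw p n) k.+1 k /\ bk (sw p n) k.+1 k.+2) \/
   (bk (sw (~~p) n) k.+1 k /\ bk (sw (~~p) n) k.+1 k.+2) by
  rewrite !(bkC _ k.+1 k) !bk_cons // E E' /=; case: (odd k); case: p; auto.
all: first [move: (M1 k.+1 k k.+2 Hk1 Hk0 Hk B1 B2) | move: (M2 k.+1 k k.+2 Hk1 Hk0 Hk B1 B2)]; lia.
Qed.
End Core.

Definition BN (f : nat -> nat -> bool) (t : nat -> nat) k l :=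
  ((k < l) && f (t l) (t k)) || ((l < k) && f (t k) (t l)).
Definition matN (f : nat -> nat -> bool) (t : nat -> nat) : bool :=
  all (fun k => all (fun l1 => all (fun l2 => (BN f t k l1 && BN f t k l2) ==> (l1 == l2)) (iota 0 4)) (iota 0 4)) (iota 0 4).
Definition PnN (f : nat -> nat -> bool) (t : nat -> nat) : bool :=
  all (fun i => all (fun j => ((i.+2 <= j) ==> f (t i) (t j)) && ((j == i.+1) ==> f (t j) (t i))) (iota 0 4)) (iota 0 4).
Definition tN (i : nat) : nat := (tauX i.+1).-1.
Definition p2N (i : nat) : nat := (pi2_idx 4 i.+1).-1.
Definition qiN (i : nat) : nat := nth 0 [:: 2; 0; 3; 1] i.
Definition upF (b01 b02 b03 b12 b13 b23 : bool) (a b : nat) : bool :=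
  match a, b with 0,1 => b01 | 0,2 => b02 | 0,3=>b03 | 1,2=>b12 | 1,3=>b13 | 2,3=>b23 | _,_ => false end.
Definition FN (b01 b02 b03 b12 b13 b23 : bool) (i j : nat) : bool :=
  if i < j then upF b01 b02 b03 b12 b13 b23 i j
  else if j < i then ~~ upF b01 b02 b03 b12 b13 b23 j i else false.
Lemma brute b01 b02 b03 b12 b13 b23 :
  matN (FN b01 b02 b03 b12 b13 b23) id ==> matN (FN b01 b02 b03 b12 b13 b23) tN ==>
  PnN (FN b01 b02 b03 b12 b13 b23) p2N || PnN (FN b01 b02 b03 b12 b13 b23) qiN.
Proof. by move: b01 b02 b03 b12 b13 b23; do 6!case; vm_compute. Qed.

Lemma match_uniq (V : finType) (adj : rel V) n (o : 'I_n -> V) :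
  matching_ordering adj o -> forall k l1 l2 : 'I_n,
  backedge adj o k l1 || backedge adj o l1 k ->
  backedge adj o k l2 || backedge adj o l2 k -> l1 = l2.
Proof.
move=> [_ HM] k l1 l2 H1 H2.
move/card_le1_eqP: (HM k) => /(_ l1 l2); rewrite !inE => E; symmetry; exact: E.
Qed.

Lemma match_conv (V : finType) (adj : rel V) n (o : 'I_n -> V) (al : nat -> nat) (U : nat -> V) :
  (forall k, k < n -> al k < n) -> (forall k, k < n -> al (al k) = k) ->
  (forall i : 'I_n, o i = U (al i)) -> matching_ordering adj o ->
  forall a b c, a < n -> b < n -> c < n -> bk V adj U al a b -> bk V adj U al a c -> b = c.
Proof.
move=> Hlt HK Ho HM a b c Ha Hb Hc Bb Bc.
have key : forall y (Hy : y < n), bk V adj U al a y ->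
   backedge adj o (Ordinal (Hlt a Ha)) (Ordinal (Hlt y Hy)) ||
   backedge adj o (Ordinal (Hlt y Hy)) (Ordinal (Hlt a Ha)).
  by move=> y Hy; rewrite /backedge !Ho /= !HK.
have := match_uniq _ _ _ _ HM _ _ _ (key b Hb Bb) (key c Hc Bc) => /(congr1 val) /= E.
by rewrite -(HK b Hb) E HK.
Qed.

Lemma U_inj (V : finType) n (o : 'I_n -> V) al (U : nat -> V) :
  (forall k, k < n -> al k < n) -> (forall k, k < n -> al (al k) = k) ->
  (forall i : 'I_n, o i = U (al i)) -> injective o ->
  forall a b, a < n -> b < n -> U a = U b -> a = b.
Proof.
move=> Hlt HK Ho Hi a b Ha Hb E.
have : o (Ordinal (Hlt a Ha)) = o (Ordinal (Hlt b Hb)) by rewrite !Ho /= !HK.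
move/Hi/(congr1 val) => /= E2. by rewrite -(HK a Ha) E2 HK.
Qed.

Lemma U_tour (V : finType) (adj : rel V) n (U : nat -> V) : tournament adj ->
  (forall a b, a < n -> b < n -> U a = U b -> a = b) ->
  forall a b, a < n -> b < n -> a != b -> adj (U a) (U b) (+) adj (U b) (U a).
Proof.
move=> [_ [_ T]] Ui a b Ha Hb Hab; apply: T; apply/eqP => E.
by move/eqP: Hab; apply; exact: Ui.
Qed.

Lemma finish (V : finType) (adj : rel V) n (U : nat -> V) :
  #|V| = n ->
  (forall a b, a < n -> b < n -> U a = U b -> a = b) ->
  (forall a b, a < n -> b < n -> a != b -> adj (U b) (U a) = ~~ adj (U a) (U b)) ->
  (forall a b, a.+2 <= b -> b < n -> adj (U a) (U b)) ->
  (forall k, k.+2 < n -> adj (U k) (U k.+1) = adj (U k.+1) (U k.+2)) ->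
  transitive_ordering adj (fun j : 'I_n => U j) \/ Pn_ordering adj (fun j : 'I_n => U j).
Proof.
move=> Hc Ui Tn F C.
have Hord : is_ordering (fun j : 'I_n => U j).
  split => // i j /= E; apply: val_inj; exact: (Ui _ _ (ltn_ord i) (ltn_ord j) E).
case: (ltnP 1 n) => Hn; last first.
  left; split => // i j Hij; have := ltn_ord j; lia.
have All : forall k, k.+1 < n -> adj (U k) (U k.+1) = adj (U 0) (U 1).
  elim => // k IH Hk; rewrite -(C k); [apply: IH|]; lia.
case He: (adj (U 0) (U 1)).
  left; split => // i j Hij; case: (ltnP i.+1 j) => H; first by apply: F.
  have Ej : nat_of_ord j = i.+1 by lia.
  rewrite /= Ej All ?He //; rewrite -Ej; exact: ltn_ord.
right; split => //; split => i j H; first by apply: F.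
have Hj := ltn_ord j.
rewrite /= H Tn ?All ?He //; lia.
Qed.

Lemma pi2_sw n k : k < n -> pi2_idx n k.+1 = (sw true n k).+1.
Proof. rewrite /pi2_idx /sw; repeat case: ifP; lia. Qed.
Lemma pi1_sw n k : k < n -> pi1_idx n k.+1 = (sw false n k).+1.
Proof. rewrite /pi1_idx /sw; repeat case: ifP; lia. Qed.
Lemma ab_case (V : finType) (adj : rel V) n (v w : 'I_n -> V) (U : nat -> V) p :
  tournament adj -> matching_ordering adj v -> matching_ordering adj w ->
  (forall i : 'I_n, v i = U (sw p n i)) -> (forall i : 'I_n, w i = U (sw (~~p) n i)) ->
  transitive_ordering adj (fun j : 'I_n => U j) \/ Pn_ordering adj (fun j : 'I_n => U j).
Proof.
move=> T Mv Mw Hv Hw.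
have Ui := U_inj _ _ _ _ _ (sw_lt p n) (swK p n) Hv Mv.1.2.
have Ut := U_tour _ _ _ _ T Ui.
have M1 := match_conv _ _ _ _ _ _ (sw_lt p n) (swK p n) Hv Mv.
have M2 := match_conv _ _ _ _ _ _ (sw_lt (~~p) n) (swK (~~p) n) Hw Mw.
exact: (finish _ _ _ _ Mv.1.1 Ui (tour_neg _ _ _ _ Ut) (far_fwd _ _ _ _ _ Ut M1 M2) (cons_eq _ _ _ _ _ Ut M1 M2)).
Qed.

Theorem partab (V : finType) (adj : rel V) (n : nat)
  (v : 'I_n -> V) (sigma : 'S_n) :
  tournament adj ->
  matching_ordering adj v ->
  matching_ordering adj (v \o sigma) ->
  ((forall i : 'I_n, (sigma i).+1 = sigmaX n i.+1) ->
     exists u : 'I_n -> V,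
       (transitive_ordering adj u \/ Pn_ordering adj u) /\
       reindexed v u (pi2_idx n)) /\
  ((forall i : 'I_n, ((sigma^-1)%g i).+1 = sigmaX n i.+1) ->
     exists u : 'I_n -> V,
       (transitive_ordering adj u \/ Pn_ordering adj u) /\
       reindexed v u (pi1_idx n)).
Proof.
move=> T Mv Mw.
have Hpos : 0 < n by rewrite -Mv.1.1; exact: T.1.
pose i0 := Ordinal Hpos.
split => Hs.
  pose U k := v (insubd i0 (sw true n k)).
  have Hv : forall i : 'I_n, v i = U (sw true n i).
    by move=> i; rewrite /U swK // valKd.
  have Hw : forall i : 'I_n, (v \o sigma) i = U (sw (~~ true) n i).
    move=> i /=; rewrite Hv; congr U.
    move: (Hs i); rewrite (SX _ _ (ltn_ord i)) => -[E]; rewrite E swK ?sw_lt ?ltn_ord //.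
  exists (fun j : 'I_n => U j); split; first exact: (ab_case V adj n v (v \o sigma) U _ T Mv Mw Hv Hw).
  by move=> i j; rewrite pi2_sw // => [[E]]; rewrite Hv /= E.
pose U k := v (insubd i0 (sw false n k)).
have Hv : forall i : 'I_n, v i = U (sw false n i).
  by move=> i; rewrite /U swK // valKd.
have Hw : forall i : 'I_n, (v \o sigma) i = U (sw (~~ false) n i).
  move=> i /=; rewrite Hv; congr U.
  have := Hs (sigma i); rewrite permK (SX _ _ (ltn_ord (sigma i))) => -[E]; rewrite E swK ?sw_lt ?ltn_ord //.
exists (fun j : 'I_n => U j); split; first exact: (ab_case V adj n v (v \o sigma) U _ T Mv Mw Hv Hw).
by move=> i j; rewrite pi1_sw // => [[E]]; rewrite Hv /= E.
Qed.


Lemma matN_of (V : finType) (adj : rel V) (o : 'I_4 -> V) (f : nat -> nat -> bool) (t : nat -> nat) :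
  (forall a b, a < 4 -> b < 4 -> adj (o (inord a)) (o (inord b)) = f (t a) (t b)) ->
  matching_ordering adj o -> matN f t.
Proof.
move=> Hf HM.
apply/allP => k; rewrite mem_iota => /andP[_ Hk].
apply/allP => l1; rewrite mem_iota => /andP[_ H1].
apply/allP => l2; rewrite mem_iota => /andP[_ H2].
apply/implyP => /andP[B1 B2].
rewrite add0n in Hk H1 H2.
have E : inord l1 = inord l2 :> 'I_4.
  apply: (match_uniq _ _ _ _ HM (inord k)); rewrite /backedge !inordK // !Hf //.
move: E => /(congr1 (@nat_of_ord 4)); rewrite !inordK // => ->; exact: eqxx.
Qed.

Lemma PnN_use (g : nat -> nat -> bool) t : PnN g t -> forall i j, i < 4 -> j < 4 ->
  (i.+2 <= j -> g (t i) (t j)) /\ (j = i.+1 -> g (t j) (t i)).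
Proof.
move=> /allP H i j Hi Hj.
have Hi' : i \in iota 0 4 by rewrite mem_iota.
move: (H i Hi') => /allP /(_ j).
rewrite mem_iota /= => /(_ Hj) /andP[/implyP A /implyP B]; split => // E.
by apply: B; rewrite E.
Qed.

Theorem partc (V : finType) (adj : rel V) (v : 'I_4 -> V) (sigma : 'S_4) :
  tournament adj ->
  matching_ordering adj v ->
  matching_ordering adj (v \o sigma) ->
  (forall i : 'I_4, (sigma i).+1 = tauX i.+1) ->
     exists u : 'I_4 -> V,
       Pn_ordering adj u /\
       (reindexed v u (pi2_idx 4) \/ reindexed v u pi21_idx).
Proof.
move=> [_ [Hirr Htr]] Mv Mw Hs.
pose f a b := adj (v (inord a)) (v (inord b)).
have Tf : forall a b, a < 4 -> b < 4 -> a != b -> f b a = ~~ f a b.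
  move=> a b Ha Hb Hab.
  have Hne : v (inord a) != v (inord b).
    apply/negP => /eqP /(Mv.1.2) /(congr1 (@nat_of_ord 4)); rewrite !inordK // => E.
    by rewrite E eqxx in Hab.
  move: (Htr _ _ Hne); rewrite /f; by case: (adj _ _); case: (adj _ _).
have Ef : forall a b, a < 4 -> b < 4 -> f a b = FN (f 0 1) (f 0 2) (f 0 3) (f 1 2) (f 1 3) (f 2 3) a b.
  move=> a b Ha Hb.
  case: a Ha => [|[|[|[|a]]]] Ha //; case: b Hb => [|[|[|[|b]]]] Hb //;
    rewrite /FN /=; first [done | by rewrite /f (negbTE (Hirr _)) | by rewrite Tf].
pose F := FN (f 0 1) (f 0 2) (f 0 3) (f 1 2) (f 1 3) (f 2 3).
have tN4 : forall a, a < 4 -> tN a < 4 by case=> [|[|[|[|a]]]] Ha.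
have Hsig : forall a, a < 4 -> sigma (inord a) = inord (tN a).
  move=> a Ha; apply: val_inj; rewrite /= inordK ?tN4 // /tN.
  by move: (Hs (inord a)); rewrite inordK // => <-.
have M1 : matN F id.
  apply: (matN_of _ _ v) Mv => a b Ha Hb; exact: Ef.
have M2 : matN F tN.
  apply: (matN_of _ _ (v \o sigma)) Mw => a b Ha Hb /=; rewrite !Hsig //; exact: (Ef _ _ (tN4 a Ha) (tN4 b Hb)).
have := brute (f 0 1) (f 0 2) (f 0 3) (f 1 2) (f 1 3) (f 2 3); rewrite -/F M1 M2 /= => /orP [P|P].
- exists (fun j : 'I_4 => v (inord (p2N j))); split; last first.
    left => i j E; congr v; apply: val_inj => /=; rewrite inordK.
      by move: E; case: i => [[|[|[|[|i]]]] Hi] //; case: j => [[|[|[|[|j]]]] Hj] //.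
    by clear E; rewrite /p2N; case: j => [[|[|[|[|j]]]] Hj].
  split; first split; first exact: Mv.1.1.
    move=> i j /Mv.1.2 /(congr1 (@nat_of_ord 4)); rewrite !inordK; last 2 first.
      by rewrite /p2N; case: j => [[|[|[|[|j]]]] Hj].
      by rewrite /p2N; case: i => [[|[|[|[|i]]]] Hi].
    by move=> E; apply: val_inj; move: E; case: i => [[|[|[|[|i]]]] Hi] //; case: j => [[|[|[|[|j]]]] Hj].
  have p24 : forall a, a < 4 -> p2N a < 4 by case=> [|[|[|[|a]]]] Ha.
  split => i j H.
    have := (PnN_use _ _ P i j (ltn_ord i) (ltn_ord j)).1 H.
    rewrite /F -Ef ?p24 //.
  have := (PnN_use _ _ P i j (ltn_ord i) (ltn_ord j)).2 H.
  rewrite /F -Ef ?p24 //.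
- exists (fun j : 'I_4 => v (inord (qiN j))); split; last first.
    right => i j E; congr v; apply: val_inj => /=; rewrite inordK.
      by move: E; case: i => [[|[|[|[|i]]]] Hi] //; case: j => [[|[|[|[|j]]]] Hj] //.
    by clear E; rewrite /qiN; case: j => [[|[|[|[|j]]]] Hj].
  split; first split; first exact: Mv.1.1.
    move=> i j /Mv.1.2 /(congr1 (@nat_of_ord 4)); rewrite !inordK; last 2 first.
      by rewrite /qiN; case: j => [[|[|[|[|j]]]] Hj].
      by rewrite /qiN; case: i => [[|[|[|[|i]]]] Hi].
    by move=> E; apply: val_inj; move: E; case: i => [[|[|[|[|i]]]] Hi] //; case: j => [[|[|[|[|j]]]] Hj].
  have p24 : forall a, a < 4 -> qiN a < 4 by case=> [|[|[|[|a]]]] Ha.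
  split => i j H.
    have := (PnN_use _ _ P i j (ltn_ord i) (ltn_ord j)).1 H.
    rewrite /F -Ef ?p24 //.
  have := (PnN_use _ _ P i j (ltn_ord i) (ltn_ord j)).2 H.
  rewrite /F -Ef ?p24 //.
Qed.

Theorem proposition5p3 (V : finType) (adj : rel V) (n : nat)
  (v : 'I_n -> V) (sigma : 'S_n) :
  tournament adj ->
  matching_ordering adj v ->
  matching_ordering adj (v \o sigma) ->
  ((forall i : 'I_n, (sigma i).+1 = sigmaX n i.+1) ->
     exists u : 'I_n -> V,
       (transitive_ordering adj u \/ Pn_ordering adj u) /\
       reindexed v u (pi2_idx n)) /\
  ((forall i : 'I_n, ((sigma^-1)%g i).+1 = sigmaX n i.+1) ->
     exists u : 'I_n -> V,
       (transitive_ordering adj u \/ Pn_ordering adj u) /\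
       reindexed v u (pi1_idx n)) /\
  (n = 4 -> (forall i : 'I_n, (sigma i).+1 = tauX i.+1) ->
     exists u : 'I_n -> V,
       Pn_ordering adj u /\
       (reindexed v u (pi2_idx n) \/ reindexed v u pi21_idx)).
Proof.
move=> T Mv Mw.
have [Ha Hb] := partab V adj n v sigma T Mv Mw.
split => //; split => //.
move=> Hn; subst n; exact: (partc V adj v sigma T Mv Mw).
Qed.
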